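(* $$\sum_{i,j,k\ge0}\frac{q^{i^2+j^2+k^2}}{(q)_{i+j-k}(q)_{i+k-j}(q)_{j+k-i}}=\frac12(-\sqrt q;q)_\infty\sum_{i\ge0}\frac{(-\sqrt q;q)_i\,q^{\frac32 i^2}}{(q)_{2i}}+\frac12(\sqrt q;q)_\infty\sum_{i\ge0}\frac{(\sqrt q;q)_i\,q^{\frac32 i^2}(-1)^i}{(q)_{2i}}.$$
   Context: $0<q<1$, $\sqrt q=q^{1/2}$. $(a;q)_n=\prod_{j=0}^{n-1}(1-aq^j)$ for $n\ge 0$, $(a;q)_\infty=\lim_{n\to\infty}(a;q)_n$, $(q)_n=(q;q)_n$, and $1/(q)_n:=0$ for $n<0$. *)

(* Defs.v *)
From Stdlib Require Import Reals ZArith.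
Open Scope R_scope.

Fixpoint qpoch (a q : R) (n : nat) : R :=
  match n with
  | O => 1
  | S m => qpoch a q m * (1 - a * q ^ m)
  end.

(* 1/(q)_n for an integer n, with 1/(q)_n := 0 for n < 0 *)
Definition inv_qfac (q : R) (n : Z) : R :=
  if (n <? 0)%Z then 0 else / qpoch q q (Z.to_nat n).

Definition lhs_term (q : R) (i j k : nat) : R :=
  q ^ (i * i + j * j + k * k)
  * inv_qfac q (Z.of_nat i + Z.of_nat j - Z.of_nat k)
  * inv_qfac q (Z.of_nat i + Z.of_nat k - Z.of_nat j)
  * inv_qfac q (Z.of_nat j + Z.of_nat k - Z.of_nat i).

(* partial sum over the cube 0 <= i,j,k <= N (terms are nonnegative) *)
Definition lhs_partial (q : R) (N : nat) : R :=
  sum_f_R0 (fun i => sum_f_R0 (fun j => sum_f_R0 (fun k => lhs_term q i j k) N) N) N.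

(* Main.v *)
Require Import Defs.
From Stdlib Require Import Reals ZArith Lia Lra.
Open Scope R_scope.

Lemma cv_ext (u v : nat -> R) l : (forall n, u n = v n) -> Un_cv u l -> Un_cv v l.
Proof. intros H C e He. destruct (C e He) as [N HN]. exists N. intros n Hn. rewrite <- H. auto. Qed.

Lemma cv_eventually (u v : nat -> R) l N0 : (forall n, (N0 <= n)%nat -> u n = v n) -> Un_cv v l -> Un_cv u l.
Proof. intros H C e He. destruct (C e He) as [N HN]. exists (max N N0). intros n Hn.
  rewrite H by lia. apply HN. lia. Qed.

Lemma cv_const c : Un_cv (fun _ => c) c.
Proof. intros e He. exists O. intros n _. unfold Rdist. rewrite Rminus_diag, Rabs_R0. auto. Qed.

Lemma cv_scal c (u : nat -> R) l : Un_cv u l -> Un_cv (fun n => c * u n) (c * l).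
Proof. intro H. apply (CV_mult (fun _ => c)); [apply cv_const|exact H]. Qed.

Lemma cv_subseq (u : nat -> R) phi l : (forall n, (n <= phi n)%nat) -> Un_cv u l -> Un_cv (fun n => u (phi n)) l.
Proof. intros Hp C e He. destruct (C e He) as [N HN]. exists N. intros n Hn. apply HN.
  specialize (Hp n). lia. Qed.

Lemma cv_shift_l (u : nat -> R) k l : Un_cv u l -> Un_cv (fun n => u (k + n)%nat) l.
Proof. intros C e He. destruct (C e He) as [N HN]. exists N. intros n Hn. apply HN. lia. Qed.

Lemma sum_zero_fun (u : nat -> R) N : (forall j, (j <= N)%nat -> u j = 0) -> sum_f_R0 u N = 0.
Proof. induction N; intros H; simpl. apply H; lia. rewrite IHN. rewrite (H (S N)) by lia. ring. intros; apply H; lia. Qed.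

Lemma series_prefix0 (u : nat -> R) j0 l :
  (forall j, (j < j0)%nat -> u j = 0) ->
  Un_cv (sum_f_R0 (fun m => u (j0 + m)%nat)) l -> Un_cv (sum_f_R0 u) l.
Proof.
  intros H0 C.
  assert (E : forall m, sum_f_R0 u (m + j0) = sum_f_R0 (fun m => u (j0 + m)%nat) m).
  { induction m.
    - simpl. destruct j0 as [|j0]. simpl. reflexivity.
      rewrite tech5. rewrite sum_zero_fun. rewrite Nat.add_0_r. ring.
      intros; apply H0; lia.
    - replace (S m + j0)%nat with (S (m + j0)) by lia. rewrite !tech5. rewrite IHm.
      replace (j0 + S m)%nat with (S (m + j0)) by lia. reflexivity. }
  apply (CV_shift _ j0). apply (cv_ext (sum_f_R0 (fun m => u (j0 + m)%nat))).
  intro n. rewrite E. reflexivity. exact C.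
Qed.

Lemma fin_sum_series (F : nat -> nat -> R) (D : nat -> R) Sm :
  (forall s, (s <= Sm)%nat -> Un_cv (sum_f_R0 (fun j => F j s)) (D s)) ->
  Un_cv (sum_f_R0 (fun j => sum_f_R0 (F j) Sm)) (sum_f_R0 D Sm).
Proof.
  induction Sm; intros H.
  - simpl. apply H. lia.
  - simpl. apply (cv_ext (fun n => sum_f_R0 (fun j => sum_f_R0 (F j) Sm) n + sum_f_R0 (fun j => F j (S Sm)) n)).
    intro n. rewrite <- plus_sum. reflexivity.
    apply CV_plus. apply IHSm. intros; apply H; lia. apply H; lia.
Qed.

Lemma fin_sum_cv (f : nat -> nat -> R) (g : nat -> R) K :
  (forall k, Un_cv (fun N => f N k) (g k)) -> Un_cv (fun N => sum_f_R0 (f N) K) (sum_f_R0 g K).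
Proof.
  intros H. induction K; simpl. apply H.
  apply CV_plus; auto.
Qed.

Lemma dom_cv (g M : nat -> R) SM :
  (forall k, Rabs (g k) <= M k) -> Un_cv (sum_f_R0 M) SM -> exists S, Un_cv (sum_f_R0 g) S.
Proof.
  intros Hd C.
  assert (C2 : {l | Un_cv (fun N => sum_f_R0 (fun k => 2 * M k) N) l}).
  { exists (2 * SM). apply (cv_ext (fun N => 2 * sum_f_R0 M N)).
    intro n. rewrite scal_sum. apply sum_eq. intros; ring. apply cv_scal. exact C. }
  destruct (Rseries_CV_comp (fun k => Rabs (g k) + g k) (fun k => 2 * M k)) as [l1 H1].
  { intro n. specialize (Hd n). split. pose proof (Rle_abs (- g n)). rewrite Rabs_Ropp in H. lra.
    pose proof (Rle_abs (g n)). lra. }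
  exact C2.
  destruct (Rseries_CV_comp (fun k => Rabs (g k)) (fun k => 2 * M k)) as [l2 H2].
  { intro n. specialize (Hd n). split. apply Rabs_pos. pose proof (Rabs_pos (g n)). lra. }
  exact C2.
  exists (l1 - l2). apply (cv_ext (fun N => sum_f_R0 (fun k => Rabs (g k) + g k) N - sum_f_R0 (fun k => Rabs (g k)) N)).
  intro n. rewrite <- minus_sum. apply sum_eq. intros; ring.
  apply CV_minus; assumption.
Qed.

Lemma partial_diff_bound (g M : nat -> R) K n :
  (forall k, Rabs (g k) <= M k) ->
  Rabs (sum_f_R0 g (K + n) - sum_f_R0 g K) <= sum_f_R0 M (K + n) - sum_f_R0 M K.
Proof.
  intros Hd. induction n.
  - rewrite Nat.add_0_r. rewrite !Rminus_diag, Rabs_R0. lra.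
  - replace (K + S n)%nat with (S (K + n)) by lia. rewrite !tech5.
    replace (sum_f_R0 g (K + n) + g (S (K + n)) - sum_f_R0 g K) with
      ((sum_f_R0 g (K + n) - sum_f_R0 g K) + g (S (K + n))) by ring.
    eapply Rle_trans. apply Rabs_triang. specialize (Hd (S (K + n))). lra.
Qed.

Lemma tail_bound (g M : nat -> R) Sg SM K :
  (forall k, Rabs (g k) <= M k) -> Un_cv (sum_f_R0 g) Sg -> Un_cv (sum_f_R0 M) SM ->
  Rabs (Sg - sum_f_R0 g K) <= SM - sum_f_R0 M K.
Proof.
  intros Hd Cg CM.
  apply (@Rle_cv_lim (fun n => Rabs (sum_f_R0 g (K + n) - sum_f_R0 g K))
                    (fun n => sum_f_R0 M (K + n) - sum_f_R0 M K)).
  intro n. apply partial_diff_bound; auto.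
  apply cv_cvabs. apply CV_minus. apply cv_shift_l. exact Cg. apply cv_const.
  apply CV_minus. apply cv_shift_l. exact CM. apply cv_const.
Qed.

Lemma tannery (f : nat -> nat -> R) (g M : nat -> R) SM :
  (forall N k, Rabs (f N k) <= M k) -> Un_cv (sum_f_R0 M) SM ->
  (forall k, Un_cv (fun N => f N k) (g k)) ->
  exists Sg, Un_cv (sum_f_R0 g) Sg /\ Un_cv (fun N => sum_f_R0 (f N) N) Sg.
Proof.
  intros Hd CM Cf.
  assert (Hg : forall k, Rabs (g k) <= M k).
  { intro k. apply (@Rle_cv_lim (fun N => Rabs (f N k)) (fun _ => M k)).
    intro; apply Hd. apply cv_cvabs. apply Cf. apply cv_const. }
  assert (Mpos : forall k, 0 <= M k).
  { intro k. eapply Rle_trans. apply Rabs_pos. apply (Hd O). }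
  destruct (dom_cv g M SM Hg CM) as [Sg Cg].
  exists Sg. split. exact Cg.
  intros e He.
  assert (He3 : e / 3 > 0) by lra.
  destruct (CM _ He3) as [K HK].
  specialize (HK K (le_n _)). unfold Rdist in HK.
  assert (HMK : SM - sum_f_R0 M K < e / 3).
  { pose proof (Rle_abs (sum_f_R0 M K - SM)). rewrite <- Rabs_Ropp in HK.
    pose proof (Rle_abs (-(sum_f_R0 M K - SM))). lra. }
  destruct (fin_sum_cv f g K Cf _ He3) as [N1 HN1].
  exists (max N1 K). intros N HN. unfold Rdist.
  specialize (HN1 N ltac:(lia)). unfold Rdist in HN1.
  pose proof (tail_bound g M Sg SM K Hg Cg CM) as T1.
  pose proof (partial_diff_bound (f N) M K (N - K) (Hd N)) as T2.
  replace (K + (N - K))%nat with N in T2 by lia.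
  pose proof (sum_incr M N SM CM Mpos) as T3.
  replace (sum_f_R0 (f N) N - Sg) with
    ((sum_f_R0 (f N) N - sum_f_R0 (f N) K) + (sum_f_R0 (f N) K - sum_f_R0 g K) - (Sg - sum_f_R0 g K)) by ring.
  eapply Rle_lt_trans. apply Rabs_triang. rewrite Rabs_Ropp.
  eapply Rle_lt_trans. apply Rplus_le_compat_r. apply Rabs_triang.
  lra.
Qed.

Lemma m1_even n : (-1) ^ (2 * n) = 1.
Proof. rewrite pow_mult. replace ((-1) ^ 2) with 1 by ring. apply pow1. Qed.

Lemma m1_odd n : (-1) ^ (2 * n + 1) = -1.
Proof. rewrite pow_add, m1_even. ring. Qed.

Lemma even_part_sum (a : nat -> R) M :
  sum_f_R0 (fun m => a (2 * m)%nat) M =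
  (sum_f_R0 a (2 * M + 1) + sum_f_R0 (fun c => (-1) ^ c * a c) (2 * M + 1)) / 2.
Proof.
  induction M.
  - simpl. field.
  - rewrite tech5, IHM. replace (2 * S M + 1)%nat with (S (S (2 * M + 1))) by lia.
    rewrite !tech5. replace (S (S (2 * M + 1))) with (2 * (S M) + 1)%nat by lia.
    replace (S (2 * M + 1)) with (2 * S M)%nat by lia.
    rewrite m1_even, m1_odd. field.
Qed.

Lemma odd_part_sum (a : nat -> R) M :
  sum_f_R0 (fun m => a (2 * m + 1)%nat) M =
  (sum_f_R0 a (2 * M + 1) - sum_f_R0 (fun c => (-1) ^ c * a c) (2 * M + 1)) / 2.
Proof.
  induction M.
  - simpl. field.
  - rewrite tech5, IHM. replace (2 * S M + 1)%nat with (S (S (2 * M + 1))) by lia.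
    rewrite !tech5. replace (S (S (2 * M + 1))) with (2 * (S M) + 1)%nat by lia.
    replace (S (2 * M + 1)) with (2 * S M)%nat by lia.
    rewrite m1_even, m1_odd. field.
Qed.

Lemma even_odd_series (a : nat -> R) A B :
  Un_cv (sum_f_R0 a) A -> Un_cv (sum_f_R0 (fun c => (-1) ^ c * a c)) B ->
  Un_cv (sum_f_R0 (fun m => a (2 * m)%nat)) ((A + B) / 2) /\
  Un_cv (sum_f_R0 (fun m => a (2 * m + 1)%nat)) ((A - B) / 2).
Proof.
  intros CA CB. split.
  - apply (cv_ext (fun M => (sum_f_R0 a (2 * M + 1) + sum_f_R0 (fun c => (-1) ^ c * a c) (2 * M + 1)) * / 2)).
    intro; rewrite even_part_sum; reflexivity.
    apply (CV_mult _ (fun _ => / 2)). apply CV_plus; apply (cv_subseq _ (fun M => 2 * M + 1)%nat); auto; intros; lia.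
    apply cv_const.
  - apply (cv_ext (fun M => (sum_f_R0 a (2 * M + 1) - sum_f_R0 (fun c => (-1) ^ c * a c) (2 * M + 1)) * / 2)).
    intro; rewrite odd_part_sum; reflexivity.
    apply (CV_mult _ (fun _ => / 2)). apply CV_minus; apply (cv_subseq _ (fun M => 2 * M + 1)%nat); auto; intros; lia.
    apply cv_const.
Qed.

Fixpoint wt (z q : R) (c : nat) : R :=
  match c with O => 1 | S c => wt z q c * (z * q ^ c) end.

Definition qbin (q : R) (N c : nat) : R :=
  if (c <=? N)%nat then qpoch q q N / (qpoch q q c * qpoch q q (N - c)) else 0.

Lemma qpoch_S a q n : qpoch a q (S n) = qpoch a q n * (1 - a * q ^ n).
Proof. reflexivity. Qed.

Lemma qpoch_split a q m n : qpoch a q (m + n) = qpoch a q m * qpoch (a * q ^ m) q n.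
Proof.
  induction n. rewrite Nat.add_0_r. simpl. ring.
  replace (m + S n)%nat with (S (m + n)) by lia. rewrite !qpoch_S, IHn, pow_add. ring.
Qed.

Lemma pow_01 q n : 0 <= q <= 1 -> 0 <= q ^ n <= 1.
Proof.
  intros [H0 H1]. induction n; simpl. lra. destruct IHn. split. apply Rmult_le_pos; auto.
  replace 1 with (1 * 1) by ring. apply Rmult_le_compat; auto.
Qed.

Lemma qpoch_pos a q n : 0 <= q <= 1 -> a < 1 -> 0 < qpoch a q n.
Proof.
  intros Hq Ha. induction n; simpl. lra. apply Rmult_lt_0_compat; auto.
  destruct (pow_01 q n Hq). destruct (Rle_or_lt a 0).
  - assert (0 <= - a * q ^ n) by (apply Rmult_le_pos; lra). lra.
  - assert (a * q ^ n <= a * 1) by (apply Rmult_le_compat_l; lra). lra.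
Qed.

Lemma qpoch_nonneg a q n : 0 <= q <= 1 -> 0 <= a <= 1 -> 0 <= qpoch a q n.
Proof.
  intros Hq Ha. induction n; simpl. lra. destruct (pow_01 q n Hq).
  apply Rmult_le_pos; auto. assert (a * q ^ n <= 1 * 1) by (apply Rmult_le_compat; lra). lra.
Qed.

Lemma qpoch_le1 a q n : 0 <= q <= 1 -> 0 <= a <= 1 -> qpoch a q n <= 1.
Proof.
  intros Hq Ha. induction n; simpl. lra.
  destruct (pow_01 q n Hq).
  assert (0 <= a * q ^ n) by (apply Rmult_le_pos; lra).
  pose proof (qpoch_nonneg a q n Hq Ha).
  assert (a * q ^ n <= 1 * 1) by (apply Rmult_le_compat; lra).
  replace 1 with (1 * 1) by ring. apply Rmult_le_compat; lra.
Qed.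

Lemma qpoch_q_ge q n : 0 <= q < 1 -> (1 - q) ^ n <= qpoch q q n.
Proof.
  intros Hq. induction n; simpl. lra.
  rewrite Rmult_comm. apply Rmult_le_compat. apply pow_le; lra. lra. auto.
  destruct (pow_01 q n ltac:(lra)). assert (q * q ^ n <= q * 1) by (apply Rmult_le_compat_l; lra). lra.
Qed.

Lemma pow_cv0 q : 0 <= q < 1 -> Un_cv (fun n => q ^ n) 0.
Proof.
  intros Hq e He. destruct (pow_lt_1_zero q ltac:(rewrite Rabs_right; lra) e He) as [N HN].
  exists N. intros n Hn. unfold Rdist. rewrite Rminus_0_r. auto.
Qed.

Section Q.
Variable q : R.
Hypothesis hq0 : 0 < q.
Hypothesis hq1 : q < 1.

Lemma Pq_pos n : 0 < qpoch q q n.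
Proof. apply qpoch_pos; lra. Qed.

Lemma Pq_neq n : qpoch q q n <> 0.
Proof. apply Rgt_not_eq, Pq_pos. Qed.

Lemma qbin_0 N : qbin q N 0 = 1.
Proof. unfold qbin. simpl. rewrite Nat.sub_0_r. field. apply Pq_neq. Qed.

Lemma qbin_big N c : (N < c)%nat -> qbin q N c = 0.
Proof. intros H. unfold qbin. destruct (Nat.leb_spec c N). lia. reflexivity. Qed.

Lemma qbin_pascal N c : qbin q (S N) (S c) = qbin q N (S c) + q ^ (N - c) * qbin q N c.
Proof.
  destruct (lt_eq_lt_dec c N) as [[Hlt|Heq]|Hgt].
  - destruct (Nat.le_exists_sub (S c) N Hlt) as [d [Hd _]]. subst N.
    unfold qbin.
    destruct (Nat.leb_spec (S c) (S (d + S c))); [|lia].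
    destruct (Nat.leb_spec (S c) (d + S c)); [|lia].
    destruct (Nat.leb_spec c (d + S c)); [|lia].
    replace (S (d + S c) - S c)%nat with (S d) by lia.
    replace (d + S c - S c)%nat with d by lia.
    replace (d + S c - c)%nat with (S d) by lia.
    replace (d + S c)%nat with (c + S d)%nat by lia.
    rewrite !qpoch_S. rewrite qpoch_split. rewrite qpoch_S.
    pose proof (Pq_neq c). pose proof (Pq_neq d).
    pose proof (qpoch_pos q q c ltac:(lra) hq1) .
    assert (A1 : 1 - q * q ^ c <> 0).
    { destruct (pow_01 q c ltac:(lra)). assert (q * q ^ c <= q * 1) by (apply Rmult_le_compat_l; lra). lra. }
    assert (A2 : 1 - q * q ^ d <> 0).
    { destruct (pow_01 q d ltac:(lra)). assert (q * q ^ d <= q * 1) by (apply Rmult_le_compat_l; lra). lra. }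
    assert (A3 : qpoch (q * q ^ c) q d <> 0).
    { apply Rgt_not_eq. apply qpoch_pos. lra. destruct (pow_01 q c ltac:(lra)).
      assert (q * q ^ c <= q * 1) by (apply Rmult_le_compat_l; lra). lra. }
    assert (A4 : 1 - q * q ^ c * q ^ d <> 0).
    { destruct (pow_01 q c ltac:(lra)). destruct (pow_01 q d ltac:(lra)).
      assert (q * q ^ c * q ^ d <= q * 1 * 1) by (apply Rmult_le_compat; try apply Rmult_le_compat; try apply Rmult_le_pos; lra). lra. }
    rewrite !pow_add. simpl. field. repeat split; auto.
  - subst N. unfold qbin.
    destruct (Nat.leb_spec (S c) (S c)); [|lia].
    destruct (Nat.leb_spec (S c) c); [lia|].
    destruct (Nat.leb_spec c c); [|lia].
    rewrite !Nat.sub_diag. simpl. field. split; [apply Pq_neq|].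
    pose proof (Pq_neq (S c)). simpl in H2. intro HH; apply H2; rewrite HH; ring.
  - rewrite !qbin_big by lia. ring.
Qed.

Lemma qbinom_thm z N : qpoch (- z) q N = sum_f_R0 (fun c => qbin q N c * wt z q c) N.
Proof.
  induction N.
  - simpl. rewrite qbin_0. ring.
  - rewrite qpoch_S, IHN.
    rewrite (decomp_sum _ (S N)) by lia. simpl pred. rewrite qbin_0.
    rewrite (sum_eq (fun i => qbin q (S N) (S i) * wt z q (S i))
               (fun i => qbin q N (S i) * wt z q (S i) + (z * q ^ N) * (qbin q N i * wt z q i))).
    2:{ intros i Hi. rewrite qbin_pascal. simpl.
        replace (q ^ N) with (q ^ (N - i) * q ^ i).
        ring. rewrite <- pow_add. f_equal. lia. }
    rewrite (plus_sum (fun i => qbin q N (S i) * wt z q (S i)) (fun i => z * q ^ N * (qbin q N i * wt z q i))).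
    assert (E2 : sum_f_R0 (fun i => z * q ^ N * (qbin q N i * wt z q i)) N =
                 (z * q ^ N) * sum_f_R0 (fun c => qbin q N c * wt z q c) N).
    { rewrite scal_sum. apply sum_eq. intros; ring. }
    rewrite E2.
    assert (E : 1 * wt z q 0 + sum_f_R0 (fun i => qbin q N (S i) * wt z q (S i)) N =
                sum_f_R0 (fun c => qbin q N c * wt z q c) N).
    { transitivity (sum_f_R0 (fun c => qbin q N c * wt z q c) (S N)).
      rewrite (decomp_sum (fun c => qbin q N c * wt z q c) (S N)) by lia.
      simpl pred. rewrite qbin_0. reflexivity.
      rewrite tech5. rewrite (qbin_big N (S N)) by lia. ring. }
    rewrite <- Rplus_assoc, E. ring.
Qed.
End Q.

Section Q.
Variable q : R.
Hypothesis hq0 : 0 < q.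
Hypothesis hq1 : q < 1.

Lemma qbin_form N c : (c <= N)%nat -> qbin q N c = qpoch (q * q ^ (N - c)) q c / qpoch q q c.
Proof.
  intros H. unfold qbin. destruct (Nat.leb_spec c N); [|lia].
  replace N with ((N - c) + c)%nat at 1 by lia. rewrite qpoch_split.
  field. split; apply Pq_neq; auto.
Qed.

Lemma qq_01 k : 0 <= q * q ^ k <= 1.
Proof. destruct (pow_01 q k ltac:(lra)). split. apply Rmult_le_pos; lra.
  assert (q * q ^ k <= 1 * 1) by (apply Rmult_le_compat; lra). lra. Qed.

Lemma qbin_nonneg N c : 0 <= qbin q N c.
Proof.
  destruct (le_lt_dec c N). rewrite qbin_form by auto.
  apply Rmult_le_pos. apply qpoch_nonneg. lra. apply qq_01.
  left; apply Rinv_0_lt_compat, Pq_pos; auto.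
  rewrite qbin_big by auto. lra.
Qed.

Lemma qbin_le N c : qbin q N c <= / qpoch q q c.
Proof.
  pose proof (Pq_pos q hq0 hq1 c).
  destruct (le_lt_dec c N). rewrite qbin_form by auto.
  unfold Rdiv. rewrite <- (Rmult_1_l (/ qpoch q q c)) at 2.
  apply Rmult_le_compat_r. left; apply Rinv_0_lt_compat; auto.
  apply qpoch_le1. lra. apply qq_01.
  rewrite qbin_big by auto. left; apply Rinv_0_lt_compat; auto.
Qed.

Lemma qpoch_shift_lim b c : Un_cv (fun M => qpoch (b * q ^ M) q c) 1.
Proof.
  induction c.
  - simpl. apply cv_const.
  - simpl.
    assert (X : Un_cv (fun M => b * q ^ M * q ^ c) 0).
    { apply (cv_ext (fun M => (b * q ^ c) * q ^ M)). intro; ring.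
      replace 0 with (b * q ^ c * 0) by ring. apply cv_scal. apply pow_cv0. lra. }
    pose proof (CV_mult _ _ _ _ IHc (CV_minus _ _ _ _ (cv_const 1) X)) as H.
    replace (1 * (1 - 0)) with 1 in H by ring. exact H.
Qed.

Lemma qbin_lim c : Un_cv (fun N => qbin q N c) (/ qpoch q q c).
Proof.
  apply (cv_eventually _ (fun N => qpoch (q * q ^ (N - c)) q c * / qpoch q q c) _ c).
  intros n Hn. rewrite qbin_form by auto. reflexivity.
  replace (/ qpoch q q c) with (1 * / qpoch q q c) at 1 by ring.
  apply (CV_mult _ (fun _ => / qpoch q q c)). 2: apply cv_const.
  apply (CV_shift _ c). apply (cv_ext (fun M => qpoch (q * q ^ M) q c)).
  intro n. f_equal. f_equal. f_equal. lia. apply qpoch_shift_lim.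
Qed.

Lemma wt_neq z c : z <> 0 -> wt z q c <> 0.
Proof. intros Hz. induction c; simpl. lra. apply Rmult_integral_contrapositive_currified; auto.
  apply Rmult_integral_contrapositive_currified; auto. apply pow_nonzero. lra. Qed.

Lemma euler z : z <> 0 ->
  exists E, Un_cv (sum_f_R0 (fun c => wt z q c / qpoch q q c)) E /\ Un_cv (fun N => qpoch (- z) q N) E.
Proof.
  intros Hz.
  set (M := fun c => Rabs (wt z q c) / (1 - q) ^ c).
  assert (Mneq : forall c, M c <> 0).
  { intro c. unfold M. unfold Rdiv. apply Rmult_integral_contrapositive_currified.
    apply Rabs_no_R0. apply wt_neq; auto. apply Rinv_neq_0_compat. apply pow_nonzero. lra. }
  destruct (Alembert_C2 M Mneq) as [SM CM].
  { apply (cv_ext (fun n => Rabs z / (1 - q) * q ^ n)).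
    intro n. unfold M. simpl wt. simpl pow.
    rewrite Rabs_mult, Rabs_mult. rewrite (Rabs_pos_eq (q ^ n)) by (apply pow_le; lra).
    assert (Ew : Rabs (wt z q n) <> 0) by (apply Rabs_no_R0, wt_neq; auto).
    assert (Ep : (1 - q) ^ n <> 0) by (apply pow_nonzero; lra).
    replace (Rabs (wt z q n) * (Rabs z * q ^ n) / ((1 - q) * (1 - q) ^ n) /
     (Rabs (wt z q n) / (1 - q) ^ n)) with (Rabs z / (1 - q) * q ^ n) by (field; lra).
    rewrite (Rabs_pos_eq (Rabs z / (1 - q) * q ^ n)). reflexivity.
    apply Rmult_le_pos. unfold Rdiv. apply Rmult_le_pos. apply Rabs_pos.
    left; apply Rinv_0_lt_compat; lra. apply pow_le; lra.
    replace 0 with (Rabs z / (1 - q) * 0) by ring. apply cv_scal. apply pow_cv0. lra. }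
  destruct (tannery (fun N c => qbin q N c * wt z q c) (fun c => wt z q c / qpoch q q c) M SM)
    as [Sg [C1 C2]].
  - intros N c. unfold M. rewrite Rabs_mult. rewrite (Rabs_pos_eq (qbin q N c)) by apply qbin_nonneg.
    unfold Rdiv. rewrite Rmult_comm. apply Rmult_le_compat_l. apply Rabs_pos.
    eapply Rle_trans. apply qbin_le.
    apply Rinv_le_contravar. apply pow_lt; lra. apply qpoch_q_ge. lra.
  - exact CM.
  - intro c. unfold Rdiv. rewrite Rmult_comm. apply (CV_mult _ (fun _ => wt z q c)).
    apply qbin_lim. apply cv_const.
  - exists Sg. split. exact C1.
    apply (cv_ext (fun N => sum_f_R0 (fun c => qbin q N c * wt z q c) N)).
    intro N. rewrite qbinom_thm; auto. exact C2.
Qed.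
End Q.

Definition ee (n s : nat) : nat := ((2 * n - s) * (2 * n - s) + s * s + (2 * n - s) * s)%nat.

Lemma qpoch_front a q n : qpoch a q (S n) = (1 - a) * qpoch (a * q) q n.
Proof.
  induction n. simpl. ring.
  rewrite qpoch_S, IHn, qpoch_S. simpl. ring.
Qed.

Lemma wt_scale z a q s : wt (z * a) q s = wt z q s * a ^ s.
Proof. induction s; simpl. ring. rewrite IHs. ring. Qed.

Lemma wt_sq y q s : q = y * y -> wt y q s = y ^ (s * s).
Proof.
  intros Hq. induction s; simpl. reflexivity. rewrite IHs, Hq.
  rewrite Rpow_mult_distr. replace (s + s * S s)%nat with (s * s + s + s)%nat by nia.
  rewrite !pow_add. ring.
Qed.

Lemma half_prod y q n : y <> 0 -> q = y * y ->
  qpoch (- (y / y ^ (2 * n))) q n * y ^ (2 * n * n) = y ^ (n * n) * qpoch (- y) q n.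
Proof.
  intros Hy Hq. induction n.
  - simpl. ring.
  - rewrite qpoch_front.
    replace (- (y / y ^ (2 * S n)) * q) with (- (y / y ^ (2 * n))).
    2:{ rewrite Hq. replace (2 * S n)%nat with (2 * n + 2)%nat by lia. rewrite pow_add.
        field; repeat split; try apply pow_nonzero; auto. }
    replace (2 * S n * S n)%nat with (2 * n * n + (4 * n + 2))%nat by nia.
    rewrite (pow_add y (2 * n * n)).
    replace (S n * S n)%nat with (n * n + (2 * n + 1))%nat by nia.
    rewrite (pow_add y (n * n)), qpoch_S.
    transitivity ((1 - - (y / y ^ (2 * S n))) * y ^ (4 * n + 2) * (qpoch (- (y / y ^ (2 * n))) q n * y ^ (2 * n * n))).
    ring. rewrite IHn. rewrite Hq.
    replace (2 * S n)%nat with (2 * n + 2)%nat by lia.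
    replace (4 * n + 2)%nat with ((2 * n + 1) + (2 * n + 1))%nat by lia.
    rewrite !pow_add. replace (y * y) with (y ^ 2) by ring. rewrite <- pow_mult.
    field; repeat split; try apply pow_nonzero; auto.
Qed.

Lemma fin_id_qbin y q n : y <> 0 -> q = y * y -> 0 < q < 1 ->
  sum_f_R0 (fun s => qbin q (2 * n) s * y ^ (ee n s)) (2 * n) = y ^ (3 * (n * n)) * qpoch (- y) q n ^ 2.
Proof.
  intros Hy Hq [hq0 hq1].
  set (z := y / y ^ (2 * n)).
  transitivity (y ^ (4 * (n * n)) * sum_f_R0 (fun s => qbin q (2 * n) s * wt z q s) (2 * n)).
  { rewrite scal_sum. apply sum_eq. intros s Hs.
    assert (W : wt z q s * (y ^ (2 * n)) ^ s = y ^ (s * s)).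
    { rewrite <- wt_scale. unfold z. replace (y / y ^ (2 * n) * y ^ (2 * n)) with y.
      apply wt_sq; auto. field. apply pow_nonzero; auto. }
    assert (Ex : (ee n s + 2 * n * s = 4 * (n * n) + s * s)%nat).
    { unfold ee. replace (2 * n)%nat with ((2 * n - s) + s)%nat at 2 3 by lia. nia. }
    assert (Hp : y ^ (2 * n * s) <> 0) by (apply pow_nonzero; auto).
    assert (E2 : y ^ ee n s * y ^ (2 * n * s) = y ^ (4 * (n * n)) * (wt z q s * y ^ (2 * n * s))).
    { rewrite <- pow_mult in W. rewrite W. rewrite <- pow_add, Ex, pow_add. ring. }
    apply (Rmult_eq_reg_r (y ^ (2 * n * s))); auto.
    transitivity (qbin q (2 * n) s * (y ^ ee n s * y ^ (2 * n * s))). ring.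
    rewrite E2. ring. }
  rewrite <- qbinom_thm by auto.
  replace (2 * n)%nat with (n + n)%nat at 1 by lia. rewrite qpoch_split.
  replace (- z * q ^ n) with (- y).
  2:{ unfold z. rewrite Hq. replace (y * y) with (y ^ 2) by ring. rewrite <- pow_mult.
      rewrite Nat.mul_comm. field. apply pow_nonzero; auto. }
  pose proof (half_prod y q n Hy Hq) as HP. fold z in HP.
  replace (4 * (n * n))%nat with (2 * n * n + 2 * n * n)%nat by lia.
  replace (3 * (n * n))%nat with (n * n + 2 * n * n)%nat by lia.
  rewrite !pow_add.
  transitivity ((qpoch (- z) q n * y ^ (2 * n * n)) * y ^ (2 * n * n) * qpoch (- y) q n). ring.
  rewrite HP. ring.
Qed.

Lemma fin_id y q n : y <> 0 -> q = y * y -> 0 < q < 1 ->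
  sum_f_R0 (fun s => y ^ (ee n s) / (qpoch q q (2 * n - s) * qpoch q q s)) (2 * n) =
  y ^ (3 * (n * n)) * qpoch (- y) q n ^ 2 / qpoch q q (2 * n).
Proof.
  intros Hy Hq Hq01.
  rewrite <- (fin_id_qbin y q n Hy Hq Hq01).
  unfold Rdiv. rewrite Rmult_comm, scal_sum. apply sum_eq. intros s Hs.
  unfold qbin. destruct (Nat.leb_spec s (2 * n)); [|lia].
  pose proof (Pq_neq q (proj1 Hq01) (proj2 Hq01)).
  field. split; auto.
Qed.

Definition Tj q i j s := if (i <=? j + s)%nat then lhs_term q i j (j + s - i) else 0.
Definition Hs q i j := sum_f_R0 (fun k => lhs_term q i j k) (i + j).

Lemma sum_prefix0_fin (u : nat -> R) d m :
  (forall k, (k < d)%nat -> u k = 0) -> sum_f_R0 u (d + m) = sum_f_R0 (fun k => u (d + k)%nat) m.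
Proof.
  intros H0. induction m.
  - rewrite Nat.add_0_r. simpl sum_f_R0 at 2. rewrite Nat.add_0_r. destruct d as [|d]. reflexivity.
    rewrite tech5. rewrite sum_zero_fun. ring.
    intros; apply H0; lia.
  - replace (d + S m)%nat with (S (d + m)) by lia. rewrite !tech5. rewrite IHm.
    replace (d + S m)%nat with (S (d + m)) by lia. reflexivity.
Qed.

Lemma sum_extend_zero (u : nat -> R) m N : (m <= N)%nat -> (forall k, (m < k)%nat -> u k = 0) ->
  sum_f_R0 u N = sum_f_R0 u m.
Proof.
  intros Hm H0. induction N.
  - assert (m = 0)%nat by lia. subst. reflexivity.
  - destruct (Nat.eq_dec m (S N)). subst. reflexivity.
    rewrite tech5, IHN by lia. rewrite H0 by lia. ring.
Qed.

Lemma partial_mono (u : nat -> R) N M : (forall k, 0 <= u k) -> (N <= M)%nat -> sum_f_R0 u N <= sum_f_R0 u M.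
Proof.
  intros Hu H. induction H. lra. rewrite tech5. specialize (Hu (S m)). lra.
Qed.

Lemma sum_nonneg (u : nat -> R) N : (forall k, 0 <= u k) -> 0 <= sum_f_R0 u N.
Proof. intros Hu. induction N; simpl. apply Hu. specialize (Hu (S N)). lra. Qed.

Ltac genpow := repeat match goal with |- context [?b ^ ?n] =>
  lazymatch n with | O => fail | S _ => fail | _ => generalize (b ^ n); intro end end.

Section Main.
Variable q : R.
Hypothesis hq0 : 0 < q.
Hypothesis hq1 : q < 1.

Lemma inv_qfac_nat n : inv_qfac q (Z.of_nat n) = / qpoch q q n.
Proof. unfold inv_qfac. destruct (Z.ltb_spec (Z.of_nat n) 0). lia. rewrite Nat2Z.id. reflexivity. Qed.

Lemma inv_qfac_neg z : (z < 0)%Z -> inv_qfac q z = 0.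
Proof. intros H. unfold inv_qfac. destruct (Z.ltb_spec z 0). reflexivity. lia. Qed.

Lemma inv_qfac_nonneg z : 0 <= inv_qfac q z.
Proof. unfold inv_qfac. destruct (z <? 0)%Z. lra. left; apply Rinv_0_lt_compat, Pq_pos; auto. Qed.

Lemma lhs_term_nonneg i j k : 0 <= lhs_term q i j k.
Proof. unfold lhs_term. repeat apply Rmult_le_pos; try apply inv_qfac_nonneg. apply pow_le; lra. Qed.

Lemma t_zero1 i j k : (i + j < k)%nat -> lhs_term q i j k = 0.
Proof. intros H. unfold lhs_term. rewrite (inv_qfac_neg (Z.of_nat i + Z.of_nat j - Z.of_nat k)) by lia. ring. Qed.
Lemma t_zero2 i j k : (i + k < j)%nat -> lhs_term q i j k = 0.
Proof. intros H. unfold lhs_term. rewrite (inv_qfac_neg (Z.of_nat i + Z.of_nat k - Z.of_nat j)) by lia. ring. Qed.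
Lemma t_zero3 i j k : (j + k < i)%nat -> lhs_term q i j k = 0.
Proof. intros H. unfold lhs_term. rewrite (inv_qfac_neg (Z.of_nat j + Z.of_nat k - Z.of_nat i)) by lia. ring. Qed.

Lemma Tj_nonneg i j s : 0 <= Tj q i j s.
Proof. unfold Tj. destruct (i <=? j + s)%nat. apply lhs_term_nonneg. lra. Qed.

Lemma Hs_nonneg i j : 0 <= Hs q i j.
Proof. apply sum_nonneg. apply lhs_term_nonneg. Qed.

Lemma H_eq_T i j : Hs q i j = sum_f_R0 (Tj q i j) (2 * i).
Proof.
  unfold Hs. destruct (le_lt_dec i j).
  - destruct (Nat.le_exists_sub i j l) as [d [Hd _]]. subst j.
    replace (i + (d + i))%nat with (d + 2 * i)%nat by lia.
    rewrite (sum_prefix0_fin _ d (2 * i)). apply sum_eq. intros s Hs. unfold Tj.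
    destruct (Nat.leb_spec i (d + i + s)); [|lia]. f_equal. lia.
    intros k Hk. apply t_zero2. lia.
  - destruct (Nat.le_exists_sub j i ltac:(lia)) as [d [Hd _]]. subst i.
    replace (2 * (d + j))%nat with (d + (d + j + j))%nat by lia.
    rewrite (sum_prefix0_fin (Tj q (d + j) j) d (d + j + j)). apply sum_eq. intros s Hs. unfold Tj.
    destruct (Nat.leb_spec (d + j) (j + (d + s))); [|lia]. f_equal. lia.
    intros k Hk. unfold Tj. destruct (Nat.leb_spec (d + j) (j + k)). lia. reflexivity.
Qed.

Lemma h_cv i j : Un_cv (fun N => sum_f_R0 (fun k => lhs_term q i j k) N) (Hs q i j).
Proof.
  apply (cv_eventually _ (fun _ => Hs q i j) _ (i + j)).
  intros n Hn. unfold Hs. apply sum_extend_zero. auto. intros; apply t_zero1; lia.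
  apply cv_const.
Qed.

Lemma h_le i j N : sum_f_R0 (fun k => lhs_term q i j k) N <= Hs q i j.
Proof.
  unfold Hs. destruct (le_lt_dec N (i + j)).
  apply partial_mono; auto. apply lhs_term_nonneg.
  rewrite (sum_extend_zero _ (i + j) N). lra. lia. intros; apply t_zero1; lia.
Qed.


Variable x : R.
Hypothesis hx0 : 0 < x.
Hypothesis hx1 : x < 1.
Hypothesis hqx : q = x * x.

Definition Aval i s := x ^ ee i s / (qpoch q q (2 * i - s) * qpoch q q s).

Lemma q_pow_x E : q ^ E = x ^ (2 * E).
Proof. rewrite hqx, pow_mult. f_equal. ring. Qed.

Lemma wt_z i c : wt (x ^ (2 * i + 1)) q c = x ^ (c * c + 2 * i * c).
Proof.
  replace (x ^ (2 * i + 1)) with (x * x ^ (2 * i)) by (rewrite pow_add; ring).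
  rewrite wt_scale, wt_sq by auto. rewrite <- pow_mult, <- pow_add. f_equal; lia.
Qed.

Lemma wt_neg z c : wt (- z) q c = (-1) ^ c * wt z q c.
Proof. replace (- z) with (z * -1) by ring. rewrite wt_scale. ring. Qed.

Lemma exp_id i h p m : (p <= 1)%nat -> (2 * h + p <= 2 * i)%nat ->
  (2 * (i * i + (i - h + m) * (i - h + m) + (i - h + m + (2 * h + p) - i) * (i - h + m + (2 * h + p) - i))
   = ee i (2 * h + p) + ((2 * m + p) * (2 * m + p) + 2 * i * (2 * m + p)))%nat.
Proof.
  intros Hp Hs. unfold ee.
  destruct (Nat.le_exists_sub h i ltac:(lia)) as [r [Hr _]]. subst i.
  replace (r + h - h + m)%nat with (r + m)%nat by lia.
  replace (r + m + (2 * h + p) - (r + h))%nat with (m + h + p)%nat by lia.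
  destruct p as [|[|p]]; [| |lia].
  - replace (2 * (r + h) - (2 * h + 0))%nat with (2 * r)%nat by lia. nia.
  - destruct r as [|r]; [lia|].
    replace (2 * (S r + h) - (2 * h + 1))%nat with (2 * r + 1)%nat by lia. nia.
Qed.

Lemma Tval i h p m : (p <= 1)%nat -> (2 * h + p <= 2 * i)%nat ->
  Tj q i (i - h + m) (2 * h + p) =
  Aval i (2 * h + p) * (x ^ ((2 * m + p) * (2 * m + p) + 2 * i * (2 * m + p)) / qpoch q q (2 * m + p)).
Proof.
  intros Hp Hs. unfold Tj. destruct (Nat.leb_spec i (i - h + m + (2 * h + p))); [|lia].
  unfold lhs_term, Aval.
  set (k := (i - h + m + (2 * h + p) - i)%nat). set (j := (i - h + m)%nat).
  replace (Z.of_nat i + Z.of_nat j - Z.of_nat k)%Z with (Z.of_nat (2 * i - (2 * h + p))) by (unfold j, k; lia).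
  replace (Z.of_nat i + Z.of_nat k - Z.of_nat j)%Z with (Z.of_nat (2 * h + p)) by (unfold j, k; lia).
  replace (Z.of_nat j + Z.of_nat k - Z.of_nat i)%Z with (Z.of_nat (2 * m + p)) by (unfold j, k; lia).
  rewrite !inv_qfac_nat, q_pow_x. unfold j, k. rewrite exp_id by auto. rewrite pow_add.
  pose proof (Pq_neq q hq0 hq1 (2 * i - (2 * h + p))). pose proof (Pq_neq q hq0 hq1 (2 * h + p)).
  pose proof (Pq_neq q hq0 hq1 (2 * m + p)).
  field. auto.
Qed.

Lemma Tzero i h p j : (p <= 1)%nat -> (2 * h + p <= 2 * i)%nat -> (j < i - h)%nat -> Tj q i j (2 * h + p) = 0.
Proof.
  intros Hp Hs Hj. unfold Tj. destruct (Nat.leb_spec i (j + (2 * h + p))); [|reflexivity].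
  apply t_zero3. lia.
Qed.

Lemma D_cv i s Ez Emz : (s <= 2 * i)%nat ->
  Un_cv (sum_f_R0 (fun c => wt (x ^ (2 * i + 1)) q c / qpoch q q c)) Ez ->
  Un_cv (sum_f_R0 (fun c => wt (- x ^ (2 * i + 1)) q c / qpoch q q c)) Emz ->
  Un_cv (sum_f_R0 (fun j => Tj q i j s)) (Aval i s * ((Ez + (-1) ^ s * Emz) / 2)).
Proof.
  intros Hs CE CEm.
  set (a := fun c => x ^ (c * c + 2 * i * c) / qpoch q q c).
  assert (Ca : Un_cv (sum_f_R0 a) Ez).
  { apply (cv_ext (sum_f_R0 (fun c => wt (x ^ (2 * i + 1)) q c / qpoch q q c))); auto.
    intro n. apply sum_eq. intros c _. unfold a. rewrite wt_z. reflexivity. }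
  assert (Cb : Un_cv (sum_f_R0 (fun c => (-1) ^ c * a c)) Emz).
  { apply (cv_ext (sum_f_R0 (fun c => wt (- x ^ (2 * i + 1)) q c / qpoch q q c))); auto.
    intro n. apply sum_eq. intros c _. unfold a. rewrite wt_neg, wt_z. unfold Rdiv. ring. }
  destruct (even_odd_series a Ez Emz Ca Cb) as [Ce Co].
  destruct (Nat.Even_or_Odd s) as [[h Hh]|[h Hh]]; subst s.
  - replace (2 * h)%nat with (2 * h + 0)%nat by lia.
    apply (series_prefix0 _ (i - h)). intros j Hj. apply Tzero; lia.
    apply (cv_ext (fun N => Aval i (2 * h + 0) * sum_f_R0 (fun m => a (2 * m)%nat) N)).
    intro N. rewrite scal_sum. apply sum_eq. intros m _. rewrite Tval by lia. unfold a.
    rewrite !Nat.add_0_r. ring.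
    rewrite Nat.add_0_r, m1_even, Rmult_1_l.
    apply cv_scal. exact Ce.
  - apply (series_prefix0 _ (i - h)). intros j Hj. apply Tzero; lia.
    apply (cv_ext (fun N => Aval i (2 * h + 1) * sum_f_R0 (fun m => a (2 * m + 1)%nat) N)).
    intro N. rewrite scal_sum. apply sum_eq. intros m _. rewrite Tval by lia. unfold a. ring.
    rewrite m1_odd. replace (Ez + -1 * Emz) with (Ez - Emz) by ring.
    apply cv_scal. exact Co.
Qed.

Lemma m1_sq s : (-1) ^ (s * s) = (-1) ^ s.
Proof.
  induction s. reflexivity.
  replace (S s * S s)%nat with (s * s + 2 * s + 1)%nat by nia.
  rewrite !pow_add, IHs, m1_even. simpl. ring.
Qed.

Lemma ee_parity i s : (s <= 2 * i)%nat -> (-1) ^ ee i s = (-1) ^ s.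
Proof.
  intros Hs.
  assert (Ex : (ee i s + 2 * (i * s) = 2 * (2 * (i * i)) + s * s)%nat).
  { unfold ee. replace (2 * i)%nat with ((2 * i - s) + s)%nat at 2 3 by lia. nia. }
  rewrite <- (m1_sq s).
  apply (Rmult_eq_reg_r ((-1) ^ (2 * (i * s)))). 2: rewrite m1_even; lra.
  rewrite <- pow_add, Ex, pow_add, !m1_even. ring.
Qed.

Lemma negx_pow e : (- x) ^ e = (-1) ^ e * x ^ e.
Proof. replace (- x) with (-1 * x) by ring. apply Rpow_mult_distr. Qed.

Lemma shift_val a P i w : Un_cv (qpoch a q) P -> qpoch a q i <> 0 ->
  Un_cv (qpoch (a * q ^ i) q) w -> w = P / qpoch a q i.
Proof.
  intros CP Hn Cw. apply (UL_sequence (qpoch (a * q ^ i) q)); auto.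
  apply (cv_ext (fun N => qpoch a q (i + N) * / qpoch a q i)).
  intro N. rewrite qpoch_split. field. auto.
  apply (CV_mult _ (fun _ => / qpoch a q i)). apply cv_shift_l. auto. apply cv_const.
Qed.

Lemma xq_pow i : x ^ (2 * i + 1) = x * q ^ i.
Proof. rewrite q_pow_x, pow_add. ring. Qed.

Definition uu i := qpoch (- x) q i * x ^ (3 * (i * i)) / qpoch q q (2 * i).
Definition vv i := qpoch x q i * x ^ (3 * (i * i)) * (-1) ^ i / qpoch q q (2 * i).

Lemma G_cv i P1 P2 : Un_cv (qpoch (- x) q) P1 -> Un_cv (qpoch x q) P2 ->
  Un_cv (sum_f_R0 (fun j => Hs q i j)) (/ 2 * P1 * uu i + / 2 * P2 * vv i).
Proof.
  intros CP1 CP2.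
  assert (Hz : x ^ (2 * i + 1) <> 0) by (apply pow_nonzero; lra).
  destruct (euler q hq0 hq1 (x ^ (2 * i + 1)) Hz) as [Ez [CE CEq]].
  destruct (euler q hq0 hq1 (- x ^ (2 * i + 1)) ltac:(apply Ropp_neq_0_compat; auto)) as [Emz [CEm CEmq]].
  assert (N1 : qpoch (- x) q i <> 0) by (apply Rgt_not_eq, qpoch_pos; lra).
  assert (N2 : qpoch x q i <> 0) by (apply Rgt_not_eq, qpoch_pos; lra).
  assert (N3 : qpoch q q (2 * i) <> 0) by (apply Pq_neq; auto).
  assert (VE : Ez = P1 / qpoch (- x) q i).
  { apply (shift_val (- x) P1 i Ez CP1 N1).
    apply (cv_ext (qpoch (- x ^ (2 * i + 1)) q)); auto. intro N. rewrite xq_pow. f_equal. ring. }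
  assert (VEm : Emz = P2 / qpoch x q i).
  { apply (shift_val x P2 i Emz CP2 N2).
    apply (cv_ext (qpoch (- - x ^ (2 * i + 1)) q)); auto. intro N. rewrite xq_pow. f_equal. ring. }
  apply (cv_ext (sum_f_R0 (fun j => sum_f_R0 (Tj q i j) (2 * i)))).
  { intro N. apply sum_eq. intros j _. rewrite H_eq_T. reflexivity. }
  replace (/ 2 * P1 * uu i + / 2 * P2 * vv i) with
    (sum_f_R0 (fun s => Aval i s * ((Ez + (-1) ^ s * Emz) / 2)) (2 * i)).
  { apply fin_sum_series. intros s Hs'. apply D_cv; auto. }
  rewrite (sum_eq _ (fun s => Ez / 2 * Aval i s + Emz / 2 * (x ^ ee i s * (-1) ^ ee i s / (qpoch q q (2 * i - s) * qpoch q q s)))).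
  2:{ intros s Hs'. rewrite ee_parity by auto. unfold Aval. field.
      split; apply Pq_neq; auto. }
  rewrite (plus_sum (fun s => Ez / 2 * Aval i s)
     (fun s => Emz / 2 * (x ^ ee i s * (-1) ^ ee i s / (qpoch q q (2 * i - s) * qpoch q q s)))).
  assert (S1 : sum_f_R0 (fun s => Ez / 2 * Aval i s) (2 * i) = Ez / 2 * sum_f_R0 (Aval i) (2 * i)).
  { rewrite scal_sum. apply sum_eq. intros; ring. }
  assert (S2 : sum_f_R0 (fun s => Emz / 2 * (x ^ ee i s * (-1) ^ ee i s / (qpoch q q (2 * i - s) * qpoch q q s))) (2 * i)
             = Emz / 2 * sum_f_R0 (fun s => (- x) ^ ee i s / (qpoch q q (2 * i - s) * qpoch q q s)) (2 * i)).
  { rewrite scal_sum. apply sum_eq. intros. rewrite negx_pow. genpow. field. split; apply Pq_neq; auto. }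
  rewrite S1, S2. unfold Aval.
  rewrite (fin_id x q i) by (auto; lra).
  rewrite (fin_id (- x) q i) by (try lra; rewrite hqx; ring).
  rewrite Ropp_involutive, negx_pow.
  replace (3 * (i * i))%nat with (2 * (i * i) + i * i)%nat by lia.
  rewrite (pow_add (-1)), m1_even, m1_sq.
  rewrite VE, VEm. unfold uu, vv.
  replace (2 * (i * i) + i * i)%nat with (3 * (i * i))%nat by lia.
  field. auto.
Qed.

End Main.

Lemma qpoch_negx_le x q n : 0 <= x <= 1 -> 0 <= q <= 1 -> qpoch (- x) q n <= 2 ^ n.
Proof.
  intros Hx Hq. induction n; simpl. lra.
  destruct (pow_01 q n Hq).
  assert (x * q ^ n <= 1 * 1) by (apply Rmult_le_compat; lra).
  assert (0 <= x * q ^ n) by (apply Rmult_le_pos; lra).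
  rewrite Rmult_comm. apply Rmult_le_compat; try lra.
  left; apply qpoch_pos; lra.
Qed.

Theorem mainTheorem19 (q : R) (hq0 : 0 < q) (hq1 : q < 1) :
  exists P1 P2 S1 S2 : R,
    Un_cv (fun n => qpoch (- sqrt q) q n) P1 /\
    Un_cv (fun n => qpoch (sqrt q) q n) P2 /\
    Un_cv (fun N => sum_f_R0 (fun i =>
              qpoch (- sqrt q) q i * sqrt q ^ (3 * (i * i)) / qpoch q q (2 * i)) N) S1 /\
    Un_cv (fun N => sum_f_R0 (fun i =>
              qpoch (sqrt q) q i * sqrt q ^ (3 * (i * i)) * (-1) ^ i / qpoch q q (2 * i)) N) S2 /\
    Un_cv (lhs_partial q) (/ 2 * P1 * S1 + / 2 * P2 * S2).
Proof.
  assert (hx0 : 0 < sqrt q) by (apply sqrt_lt_R0; lra).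
  assert (hx1 : sqrt q < 1).
  { rewrite <- sqrt_1. apply sqrt_lt_1; lra. }
  assert (hqx : q = sqrt q * sqrt q) by (rewrite sqrt_sqrt; lra).
  set (x := sqrt q) in *.
  destruct (euler q hq0 hq1 x ltac:(lra)) as [P1 [_ CP1]].
  destruct (euler q hq0 hq1 (- x) ltac:(lra)) as [P2 [_ CP2]].
  rewrite Ropp_involutive in CP2.
  set (K := 2 / ((1 - q) * (1 - q))).
  assert (HK : 0 < K) by (unfold K; apply Rdiv_lt_0_compat; [lra| apply Rmult_lt_0_compat; lra]).
  set (M := fun i : nat => K ^ i * x ^ (3 * (i * i))).
  assert (Mneq : forall i, M i <> 0).
  { intro i. unfold M. apply Rmult_integral_contrapositive_currified; apply pow_nonzero; lra. }
  destruct (Alembert_C2 M Mneq) as [SM CM].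
  { apply (cv_ext (fun n => K * x ^ 3 * (x ^ 6) ^ n)).
    intro n. assert (E : M (S n) / M n = K * x ^ 3 * (x ^ 6) ^ n).
    { unfold M. replace (3 * (S n * S n))%nat with (3 * (n * n) + (3 + 6 * n))%nat by nia.
      rewrite (pow_add x (3 * (n * n))), (pow_add x 3), (pow_mult x 6 n). simpl (K ^ S n).
      field. split; apply pow_nonzero; lra. }
    rewrite E, Rabs_pos_eq. reflexivity.
    apply Rmult_le_pos; [apply Rmult_le_pos; [lra | apply pow_le; lra] | apply pow_le, pow_le; lra].
    replace 0 with (K * x ^ 3 * 0) by ring. apply cv_scal. apply pow_cv0. apply pow_lt_1_compat. lra. lia. }
  assert (Hinv : forall i, / qpoch q q (2 * i) <= / ((1 - q) * (1 - q)) ^ i).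
  { intro i. apply Rinv_le_contravar. apply pow_lt, Rmult_lt_0_compat; lra.
    replace ((1 - q) * (1 - q)) with ((1 - q) ^ 2) by ring. rewrite <- pow_mult. apply qpoch_q_ge. lra. }
  assert (Hpow2 : forall i, 2 ^ i * / ((1 - q) * (1 - q)) ^ i = K ^ i).
  { intro i. unfold K. unfold Rdiv. rewrite (Rpow_mult_distr 2 (/ ((1 - q) * (1 - q)))), pow_inv. reflexivity. }
  assert (Hinvpos : forall i, 0 <= / qpoch q q (2 * i)).
  { intro; left; apply Rinv_0_lt_compat, Pq_pos; auto. }
  destruct (dom_cv (uu q x) M SM) as [S1 CS1]; auto.
  { intro i. unfold uu, M. rewrite Rabs_pos_eq.
    2:{ unfold Rdiv. repeat apply Rmult_le_pos; auto. left; apply qpoch_pos; lra. apply pow_le; lra. }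
    rewrite <- Hpow2. unfold Rdiv.
    replace (2 ^ i * / ((1 - q) * (1 - q)) ^ i * x ^ (3 * (i * i))) with
      (2 ^ i * x ^ (3 * (i * i)) * / ((1 - q) * (1 - q)) ^ i) by ring.
    apply Rmult_le_compat; auto. apply Rmult_le_pos. left; apply qpoch_pos; lra. apply pow_le; lra.
    apply Rmult_le_compat_r. apply pow_le; lra. apply qpoch_negx_le; lra. }
  destruct (dom_cv (vv q x) M SM) as [S2 CS2]; auto.
  { intro i. unfold vv, M. unfold Rdiv. rewrite !Rabs_mult.
    rewrite (Rabs_pos_eq (qpoch x q i)) by (left; apply qpoch_pos; lra).
    rewrite (Rabs_pos_eq (x ^ _)) by (apply pow_le; lra).
    rewrite pow_1_abs, (Rabs_pos_eq (/ _)) by auto.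
    rewrite <- Hpow2.
    replace (2 ^ i * / ((1 - q) * (1 - q)) ^ i * x ^ (3 * (i * i))) with
      (2 ^ i * x ^ (3 * (i * i)) * / ((1 - q) * (1 - q)) ^ i) by ring.
    rewrite Rmult_1_r.
    apply Rmult_le_compat; auto. apply Rmult_le_pos. left; apply qpoch_pos; lra. apply pow_le; lra.
    apply Rmult_le_compat_r. apply pow_le; lra.
    apply Rle_trans with 1. apply qpoch_le1; lra. apply pow_R1_Rle. lra. }
  exists P1, P2, S1, S2. split; [exact CP1|]. split; [exact CP2|]. split; [exact CS1|]. split; [exact CS2|].
  set (Gv := fun i => / 2 * P1 * uu q x i + / 2 * P2 * vv q x i).
  assert (CG : Un_cv (sum_f_R0 Gv) (/ 2 * P1 * S1 + / 2 * P2 * S2)).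
  { apply (cv_ext (fun N => / 2 * P1 * sum_f_R0 (uu q x) N + / 2 * P2 * sum_f_R0 (vv q x) N)).
    intro N. unfold Gv. rewrite (plus_sum (fun i => / 2 * P1 * uu q x i) (fun i => / 2 * P2 * vv q x i)).
    rewrite !scal_sum. f_equal; apply sum_eq; intros; ring.
    apply CV_plus; apply cv_scal; auto. }
  assert (Gi : forall i, Un_cv (sum_f_R0 (fun j => Hs q i j)) (Gv i)).
  { intro i. apply G_cv; auto. }
  assert (Inner : forall i, Un_cv (fun N => sum_f_R0 (fun j => sum_f_R0 (fun k => lhs_term q i j k) N) N) (Gv i)).
  { intro i.
    destruct (tannery (fun N j => sum_f_R0 (fun k => lhs_term q i j k) N) (fun j => Hs q i j) (fun j => Hs q i j) (Gv i))
      as [Sg [C1 C2]].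
    - intros N j. rewrite Rabs_pos_eq. apply h_le; auto. apply sum_nonneg. intro; apply lhs_term_nonneg; auto.
    - apply Gi.
    - intro j. apply h_cv; auto.
    - rewrite (UL_sequence _ _ _ (Gi i) C1). exact C2. }
  destruct (tannery (fun N i => sum_f_R0 (fun j => sum_f_R0 (fun k => lhs_term q i j k) N) N) Gv Gv
              (/ 2 * P1 * S1 + / 2 * P2 * S2)) as [Sg [C1 C2]].
  - intros N i. rewrite Rabs_pos_eq.
    apply Rle_trans with (sum_f_R0 (fun j => Hs q i j) N).
    apply sum_Rle. intros; apply h_le; auto.
    apply sum_incr. apply Gi. intro; apply Hs_nonneg; auto.
    apply sum_nonneg. intro; apply sum_nonneg. intro; apply lhs_term_nonneg; auto.
  - exact CG.
  - exact Inner.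
  - rewrite (UL_sequence _ _ _ CG C1). exact C2.
Qed.
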